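(* Let $\mathcal F=\{f_w:w\in\mathcal W\}$ be measurable functions $\mathsf Z\to\mathbb R$ indexed by a countable set $\mathcal W$, let $Q$ be a distribution on $\mathcal W$, $\gamma>0$, and let $\mu$ be a distribution on $\mathsf Z$ such that $f_w(Z)$, $Z\sim\mu$, is $\sigma^2$-subgaussian for all $w\in\mathcal W$. Let $\widehat w(\mu)$ be an index minimizing $\mu(f_w)$ over $\mathcal W$. If $S=(Z_1,\dots,Z_n)\sim\mu^{\otimes n}$ and, given $S=s$, $W$ has the Gibbs distribution $P^{\gamma,Q}_{W|S=s}(\mathrm dw)\propto e^{-\gamma\mu_s(f_w)}Q(\mathrm dw)$, then $$\mathbb E[\mu(f_W)]\le\inf_{w\in\mathcal W}\mu(f_w)+\frac1\gamma D(\delta_{\widehat w(\mu)}\|Q)+\frac{\gamma\sigma^2}{2n}.$$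
   Context: For $s=(z_1,\dots,z_n)$, $\mu_s(f_w)=\frac1n\sum_{i=1}^nf_w(z_i)$ is the empirical mean and $\mu(f_w)=\mathbb E_{Z\sim\mu}f_w(Z)$ the true mean. $\sigma^2$-subgaussian: $\mathbb E[e^{\lambda(X-\mathbb EX)}]\le e^{\lambda^2\sigma^2/2}$ for all real $\lambda$. $D$ is relative entropy and $D(\delta_{\widehat w}\|Q)=\log(1/Q(\widehat w))$. *)

(* Defs.v *)
From HB Require Import structures.
From mathcomp Require Import all_boot all_order all_algebra.
From mathcomp Require Import all_classical all_reals all_analysis.
Set Implicit Arguments.
Unset Strict Implicit.
Unset Printing Implicit Defensive.
Import Order.TTheory GRing.Theory Num.Theory.
Local Open Scope classical_set_scope.
Local Open Scope ring_scope.

Section Defs.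
Context {d : measure_display} {Z : measurableType d} {R : realType}
        {W : countType}.

Definition true_mean (mu : probability Z R) (f : W -> Z -> R) (w : W) : R :=
  fine (\int[mu]_z (f w z)%:E)%E.

Definition emp_mean (f : W -> Z -> R) (s : seq Z) (w : W) : R :=
  (\sum_(z <- s) f w z) / (size s)%:R.

Definition subgaussian (mu : probability Z R) (g : Z -> R) (sigma : R) : Prop :=
  mu.-integrable setT (fun z => (g z)%:E) /\
  forall lam : R,
    (\int[mu]_z (expR (lam * (g z - fine (\int[mu]_x (g x)%:E)%E)))%:E
       <= (expR (lam ^+ 2 * sigma ^+ 2 / 2))%:E)%E.

Definition distribution_on (Q : W -> R) : Prop :=
  (forall w, 0 <= Q w) /\ (\esum_(w in [set: W]) (Q w)%:E = 1)%E.

(* sum over the countable set W of an extended-real family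
   (= integral against counting measure: positive part minus negative part) *)
Definition dsum (h : W -> \bar R) : \bar R :=
  (\esum_(w in [set: W]) maxe (h w) 0%E - \esum_(w in [set: W]) maxe (- h w) 0%E)%E.

Definition gibbs_weight (f : W -> Z -> R) (Q : W -> R) (gamma : R)
  (s : seq Z) (w : W) : R := expR (- gamma * emp_mean f s w) * Q w.

(* normalizing constant (finite a.s.; `fine` maps +oo to 0, a null event) *)
Definition gibbs_norm (f : W -> Z -> R) (Q : W -> R) (gamma : R) (s : seq Z) : R :=
  fine (\esum_(w in [set: W]) (gibbs_weight f Q gamma s w)%:E)%E.

Definition gibbs (f : W -> Z -> R) (Q : W -> R) (gamma : R) (s : seq Z) (w : W) : R :=
  gibbs_weight f Q gamma s w / gibbs_norm f Q gamma s.

Definition gibbs_risk (mu : probability Z R) (f : W -> Z -> R) (Q : W -> R)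
  (gamma : R) (s : seq Z) : \bar R :=
  dsum (fun w => (gibbs f Q gamma s w * true_mean mu f w)%:E).

(* expectation over S = (Z_1,...,Z_n) ~ mu^{(x) n}, as the iterated integral
   E F(S) = \int mu(dz_1) ... \int mu(dz_n) F(z_1 :: ... :: z_n :: [::]) *)
Fixpoint iid_expect (mu : probability Z R) (n : nat) (F : seq Z -> \bar R) : \bar R :=
  match n with
  | 0 => F [::]
  | n'.+1 => (\int[mu]_z iid_expect mu n' (fun s => F (z :: s)))%E
  end.

Definition KL_dirac (Q : W -> R) (w : W) : \bar R :=
  if 0 < Q w then (ln (Q w)^-1)%:E else +oo%E.

End Defs.

(* Main.v *)
Require Import Defs.
From HB Require Import structures.
From mathcomp Require Import all_boot all_order all_algebra.
From mathcomp Require Import all_classical all_reals all_analysis.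
From mathcomp Require Import measurable_realfun.
From mathcomp Require Import lra ring.
Import Order.TTheory GRing.Theory Num.Theory.
Local Open Scope classical_set_scope.
Local Open Scope ring_scope.

Section S.
Local Open Scope ereal_scope.
Lemma le_integral_any (R : realType) (d : measure_display) (T : measurableType d)
  (mu : {measure set T -> \bar R}) (D : set T) (f g : T -> \bar R) :
  (forall x, D x -> f x <= g x) ->
  \int[mu]_(x in D) f x <= \int[mu]_(x in D) g x.
Proof.
move=> fg; rewrite /integral; apply: leeB; apply: ereal_sup_le => _ [h /= hf <-];
  exists h => //= x; apply: (le_trans (hf x)); rewrite !(funeposE, funenegE) /patch;
  case: ifPn => xD; rewrite ?lexx //.
- by apply: leU2 => //; apply: fg; rewrite inE in xD.
- by apply: leU2 => //; rewrite leeN2; apply: fg; rewrite inE in xD.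
Qed.
Lemma iid_le (R : realType) (d : measure_display) (Z : measurableType d)
  (mu : probability Z R) n (F G : seq Z -> \bar R) :
  (forall s, size s = n -> F s <= G s) -> iid_expect mu n F <= iid_expect mu n G.
Proof.
elim: n F G => [|n IH] F G FG /=; first exact: FG.
apply: le_integral_any => z _; apply: IH => s hs; apply: FG; by rewrite /= hs.
Qed.

Definition wseq {R : realType} {W : countType} (a : W -> \bar R) (i : nat) : \bar R :=
  if pickle_inv i is Some w then a w else 0.

Lemma esum_series (R : realType) (W : countType) (a : W -> \bar R) :
  (forall w, 0 <= a w) -> \esum_(w in [set: W]) a w = \sum_(i <oo) wseq a i.
Proof.
move=> a0.
have w0 i : 0 <= wseq a i by rewrite /wseq; case: pickle_inv.
rewrite nneseries_esumT // (esumID (range (@pickle W))); last by move=> i _; exact: w0.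
rewrite [X in _ + X]esum1 ?adde0; last first.
  move=> i [_ /= ni]; rewrite /wseq; case E: pickle_inv => [w|//].
  by exfalso; apply: ni; exists w => //; by have := @pickle_invK W i; rewrite E.
rewrite setTI esum_image; last by move=> x y _ _; exact: (pcan_inj pickleK_inv).
by apply: eq_esum => w _; rewrite /wseq pickleK_inv.
Qed.
Lemma esum_fun_measurable (R : realType) (d : measure_display) (T : measurableType d)
  (W : countType) (h : W -> T -> \bar R) :
  (forall w x, 0 <= h w x) -> (forall w, measurable_fun setT (h w)) ->
  measurable_fun setT (fun x => \esum_(w in [set: W]) h w x).
Proof.
move=> h0 mh.
rewrite (_ : (fun x => _) = (fun x => \sum_(i <oo | i \in xpredT) wseq (h^~ x) i)); last first.
  by apply: funext => x; rewrite esum_series.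
apply: ge0_emeasurable_sum => [k x _ _|k _]; rewrite /wseq; case: pickle_inv => //.
Qed.

Lemma integral_esum (R : realType) (d : measure_display) (T : measurableType d)
  (mu : {measure set T -> \bar R}) (W : countType) (h : W -> T -> \bar R) :
  (forall w x, 0 <= h w x) -> (forall w, measurable_fun setT (h w)) ->
  \int[mu]_x (\esum_(w in [set: W]) h w x) = \esum_(w in [set: W]) \int[mu]_x h w x.
Proof.
move=> h0 mh.
under eq_integral do rewrite esum_series //.
rewrite integral_nneseries //; last 2 first.
- by move=> i; rewrite /wseq; case: pickle_inv.
- by move=> i x _; rewrite /wseq; case: pickle_inv.
rewrite esum_series; last by move=> w; apply: integral_ge0.
apply: eq_eseriesr => i _; rewrite /wseq; case: pickle_inv => [w|]; first by [].
exact: integral0.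
Qed.
Lemma int_add_le (R : realType) (d : measure_display) (T : measurableType d)
  (mu : {measure set T -> \bar R}) (A : T -> R) (B : T -> \bar R) :
  mu.-integrable setT (EFin \o A) -> (forall z, 0 <= B z) -> measurable_fun setT B ->
  \int[mu]_z ((A z)%:E + B z) <= \int[mu]_z (A z)%:E + \int[mu]_z B z.
Proof.
move=> iA B0 mB.
have Afin : \int[mu]_z (A z)%:E \is a fin_num.
  by move: iA => /integrableP [mA]; rewrite integral_fin_num_abs //; move/measurable_EFinP: mA.
have [Boo|Boo] := eqVneq (\int[mu]_z B z) +oo.
  by rewrite Boo; move: Afin; case: (\int[mu]_z (A z)%:E) => // r _; exact: leey.
have iB : mu.-integrable setT B.
  apply/integrableP; split => //.
  under eq_integral do rewrite gee0_abs //.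
  by rewrite ltey.
by rewrite (integralD _ iA iB).
Qed.
Lemma int_cst_prob (R : realType) (d : measure_display) (Z : measurableType d)
  (mu : probability Z R) (k : R) : \int[mu]_x k%:E = k%:E.
Proof.
have := integral_cst mu measurableT k%:E.
rewrite /cst => ->.
set m := (X in _ * X); rewrite (_ : m = 1) ?mule1 //; exact: probability_setT.
Qed.

Lemma iid_main (R : realType) (d : measure_display) (Z : measurableType d)
  (mu : probability Z R) (W : countType) (g : Z -> R) (Ig : R)
  (h : W -> Z -> R) (Ih : W -> R) :
  mu.-integrable setT (EFin \o g) -> \int[mu]_z (g z)%:E = Ig%:E ->
  (forall w z, 0 <= h w z)%R -> (forall w, measurable_fun setT (h w)) ->
  (forall w, \int[mu]_z (h w z)%:E = (Ih w)%:E) ->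
  forall n (c : R) (a : W -> R), (forall w, 0 <= a w)%R ->
  iid_expect mu n (fun s => (c + \sum_(z <- s) g z)%:E
      + \esum_(w in [set: W]) (a w * \prod_(z <- s) h w z)%:E)
  <= (c + n%:R * Ig)%:E + \esum_(w in [set: W]) (a w * Ih w ^+ n)%:E.
Proof.
move=> ig Ige h0 mh Ihe.
have Ih0 w : (0 <= Ih w)%R.
  by rewrite -lee_fin -Ihe; apply: integral_ge0 => z _; rewrite lee_fin.
elim=> [|n IH] c a a0 /=.
  rewrite big_nil addr0 mul0r addr0.
  by apply: leeD => //; apply: le_esum => w _; rewrite big_nil expr0.
apply: (@le_trans _ _ (\int[mu]_z ((c + n%:R * Ig + g z)%:E
     + \esum_(w in [set: W]) ((a w * Ih w ^+ n) * h w z)%:E))).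
  apply: le_integral_any => z _.
  have -> : (fun s => (c + \sum_(z0 <- z :: s) g z0)%:E +
      \esum_(w in [set: W]) (a w * \prod_(z0 <- z :: s) h w z0)%:E) =
    (fun s => ((c + g z) + \sum_(z0 <- s) g z0)%:E +
      \esum_(w in [set: W]) ((a w * h w z) * \prod_(z0 <- s) h w z0)%:E).
    apply: funext => s; rewrite big_cons addrA; congr (_ + _).
    by apply: eq_esum => w _; rewrite big_cons mulrA.
  apply: le_trans (IH _ _ _) _; first by move=> w; apply: mulr_ge0.
  rewrite leeD //; first by rewrite lee_fin addrAC.
  by apply: le_esum => w _; rewrite lee_fin mulrAC.
apply: (le_trans (@int_add_le _ _ _ mu (fun z => (c + n%:R * Ig + g z)%R) (fun z => \esum_(w in [set: W]) ((a w * Ih w ^+ n) * h w z)%:E) _ _ _)).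
- rewrite (_ : EFin \o _ = (fun z => (c + n%:R * Ig)%:E + (g z)%:E)); last first.
    by apply: funext => z.
  apply: integrableD => //; exact: finite_measure_integrable_cst.
- by move=> z; apply: esum_ge0 => w _; rewrite lee_fin mulr_ge0 // mulr_ge0 // exprn_ge0.
- apply: esum_fun_measurable => [w z|w]; first by rewrite lee_fin mulr_ge0 // mulr_ge0 // exprn_ge0.
  apply/measurable_EFinP; apply: measurable_funM => //; exact: measurable_cst.
rewrite integral_esum; last 2 first.
- by move=> w z; rewrite lee_fin mulr_ge0 // mulr_ge0 // exprn_ge0.
- move=> w; apply/measurable_EFinP; apply: measurable_funM => //; exact: measurable_cst.
apply: leeD.
  rewrite (_ : (fun z => _) = (fun z => (c + n%:R * Ig)%:E + (g z)%:E)); last first.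
    by apply: funext => z.
  rewrite integralD //; last exact: finite_measure_integrable_cst.
  rewrite int_cst_prob Ige -EFinD lee_fin.
  by rewrite mulrSr mulrDl mul1r addrA.
apply: le_esum => w _.
rewrite (_ : (fun z => _) = (fun z => (a w * Ih w ^+ n)%:E * (h w z)%:E)); last first.
  by apply: funext => z.
rewrite ge0_integralZl_EFin //; last 3 first.
- by move=> z _; rewrite lee_fin.
- by apply/measurable_EFinP.
- by rewrite mulr_ge0 // exprn_ge0.
by rewrite Ihe -EFinM exprS lee_fin -mulrA [(Ih w * _)%R]mulrC.
Qed.
End S.

Section S2.
Local Open Scope ereal_scope.
Lemma esumZ_ge0 (R : realType) (W : countType) (k : R) (a : W -> R) :
  (0 <= k)%R -> (forall w, 0 <= a w)%R ->
  \esum_(w in [set: W]) (k * a w)%:E = k%:E * \esum_(w in [set: W]) (a w)%:E.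
Proof.
move=> k0 a0.
rewrite (@esum_series _ _ (fun w => (k * a w)%:E)); last by move=> w; rewrite lee_fin mulr_ge0.
rewrite (@esum_series _ _ (fun w => (a w)%:E)); last by move=> w; rewrite lee_fin.
rewrite -nneseriesZl; last by move=> i _; rewrite /wseq; case: pickle_inv => // w; rewrite lee_fin.
apply: eq_eseriesr => i _; rewrite /wseq; case: pickle_inv => [w|]; last by rewrite mule0.
by rewrite EFinM.
Qed.

Lemma esum_ge1 (R : realType) (W : countType) (a : W -> \bar R) w0 :
  (forall w, 0 <= a w) -> a w0 <= \esum_(w in [set: W]) a w.
Proof.
move=> a0; apply: esum_ge; exists [set w0]; last by rewrite fsbig_set1.
by split; [exact: finite_set1 | by []].
Qed.
End S2.

Section S3.
Local Open Scope ereal_scope.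

Lemma maxr0_split (R : realType) (y : R) : (Num.max y 0 = y + Num.max (- y) 0)%R.
Proof.
rewrite !maxEle; do 2 case: ifP => ?; lra.
Qed.

Lemma dsum_le (R : realType) (W : countType) (x r P : W -> R) (K : R) :
  (forall w, 0 <= r w)%R -> (forall w, 0 <= P w)%R ->
  \esum_(w in [set: W]) (P w)%:E = 1 ->
  (forall w, x w <= r w + P w * K)%R ->
  dsum (fun w => (x w)%:E) <= K%:E + \esum_(w in [set: W]) (r w)%:E.
Proof.
move=> r0 P0 P1 xle.
rewrite /dsum.
rewrite (eq_esum (b := fun w => (Num.max (x w) 0%R)%:E)); last by move=> w _; rewrite EFin_max.
rewrite [X in _ - X](eq_esum (b := fun w => (Num.max (- x w) 0%R)%:E)); last by move=> w _; rewrite EFin_max EFinN.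
set Xp := esum _ (fun w => (Num.max (x w) 0%R)%:E).
set Xn := esum _ (fun w => (Num.max (- x w) 0%R)%:E).
set Kp := Num.max K 0%R; set Kn := Num.max (- K)%R 0%R.
have Kpn : (Kp - Kn = K)%R by rewrite /Kp /Kn maxr0_split; lra.
have Kp0 : (0 <= Kp)%R by rewrite le_max lexx orbT.
have Kn0 : (0 <= Kn)%R by rewrite le_max lexx orbT.
have key : Xp + Kn%:E <= \esum_(w in [set: W]) (r w)%:E + Kp%:E + Xn.
  rewrite -[Kn%:E]mule1 -[Kp%:E]mule1 -P1 -!esumZ_ge0 // /Xp /Xn.
  rewrite -esumD; last 2 first.
  - by move=> w _; rewrite lee_fin le_max lexx orbT.
  - by move=> w _; rewrite lee_fin mulr_ge0.
  rewrite -esumD; last 2 first.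
  - by move=> w _; rewrite lee_fin.
  - by move=> w _; rewrite lee_fin mulr_ge0.
  rewrite -esumD; last 2 first.
  - by move=> w _; apply: adde_ge0; rewrite lee_fin ?mulr_ge0.
  - by move=> w _; rewrite lee_fin le_max lexx orbT.
  apply: le_esum => w _; rewrite -!EFinD lee_fin.
  have := xle w; rewrite (@maxr0_split _ (x w)) -Kpn.
  have := P0 w; nra.
have Xn0 : 0 <= Xn by apply: esum_ge0 => w _; rewrite lee_fin le_max lexx orbT.
have Xp0 : 0 <= Xp by apply: esum_ge0 => w _; rewrite lee_fin le_max lexx orbT.
have r0' : 0 <= \esum_(w in [set: W]) (r w)%:E by apply: esum_ge0 => w _; rewrite lee_fin.
move: key Xn0 Xp0 r0'.
case: Xn => [xn| |] //; last first.
  by case: Xp => [xp| |] //= *; rewrite ?leNye.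
case: (\esum_(w in [set: W]) (r w)%:E) => [sr| |] //; last first.
  by move=> *; rewrite addey ?leey.
case: Xp => [xp| |] //= + _ _ _; rewrite -!EFinD !lee_fin => h.
lra.
Qed.
End S3.

Section S4.

Lemma gibbs_pt (R : realType) (W : countType) (e m Q : W -> R) (gamma A : R) (wh : W) :
  0 < gamma -> 0 < A -> (forall w, 0 <= Q w) -> 0 < Q wh -> (forall w, m wh <= m w) ->
  (dsum (fun w => (expR (- gamma * e w) * Q w /
         fine (\esum_(v in [set: W]) (expR (- gamma * e v) * Q v)%:E) * m w)%:E)
  <= ((ln (Q wh)^-1 + ln A - 1) / gamma + e wh)%:E
     + \esum_(w in [set: W]) (Q w * expR (gamma * m w) / (gamma * A) * expR (- gamma * e w))%:E)%E.
Proof.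
move=> g0 A0 Q0 Qh0 mmin.
set q := fun w => expR (- gamma * e w) * Q w.
have q0 w : 0 <= q w by rewrite /q mulr_ge0 // ltW // expR_gt0.
have qh0 : 0 < q wh by rewrite /q mulr_gt0 // expR_gt0.
rewrite -/(q _).
have S0 : (0 <= \esum_(v in [set: W]) (q v)%:E)%E by apply: esum_ge0 => v _; rewrite lee_fin.
have Sq : ((q wh)%:E <= \esum_(v in [set: W]) (q v)%:E)%E.
  by apply: (@esum_ge1 _ _ (fun v => (q v)%:E) wh) => v; rewrite lee_fin.
set r := fun w => Q w * expR (gamma * m w) / (gamma * A) * expR (- gamma * e w).
have r0 w : 0 <= r w.
  by rewrite /r mulr_ge0 // ?mulr_ge0 // ?invr_ge0 ?mulr_ge0 // ltW // expR_gt0.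
set K := ((ln (Q wh)^-1 + ln A - 1) / gamma + e wh).
have [[Zs SE]|SE] : (exists Zs, \esum_(v in [set: W]) (q v)%:E = Zs%:E)%E \/
    (\esum_(v in [set: W]) (q v)%:E = +oo)%E.
  move: S0; case: (\esum_(v in [set: W]) (q v)%:E)%E => [Zs| |] _ //; [left; by exists Zs|by right].
all: rewrite SE /=.
  rewrite SE lee_fin in Sq.
  have Zs0 : 0 < Zs by apply: lt_le_trans Sq.
  apply: (@dsum_le R W (fun w => q w / Zs * m w) r (fun w => q w / Zs) K) => //.
  - by move=> w; rewrite divr_ge0 // ltW.
  - under eq_esum do rewrite mulrC.
    by rewrite (@esumZ_ge0 _ _ _ _ _ q0) ?invr_ge0 ?(ltW Zs0) // SE -EFinM mulVf // gt_eqF.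
  move=> w.
  set E := expR (gamma * m w).
  have gn : gamma != 0 by rewrite gt_eqF.
  have An : A != 0 by rewrite gt_eqF.
  have Zn : Zs != 0 by rewrite gt_eqF.
  have hZ : - gamma * e wh + ln (Q wh) <= ln Zs.
    have : ln (q wh) <= ln Zs by rewrite ler_ln ?posrE.
    by rewrite /q lnM ?posrE ?expR_gt0 // expRK.
  have hu : 1 + (gamma * m w + ln Zs - ln A) <= E * Zs / A.
    have := expR_ge1Dx (gamma * m w + ln Zs - ln A).
    by rewrite expRD expRD expRN lnK ?posrE // lnK ?posrE.
  have gK : gamma * K = - ln (Q wh) + ln A - 1 + gamma * e wh.
    by rewrite /K lnV ?posrE //; field.
  have key : gamma * m w <= E * Zs / A + gamma * K.
    move: hu hZ; rewrite gK mulNr; lra.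
  have p0 : 0 <= q w / (Zs * gamma) by rewrite divr_ge0 // mulr_ge0 // ltW.
  have := ler_wpM2l p0 key.
  have -> : q w / (Zs * gamma) * (gamma * m w) = q w / Zs * m w by field; rewrite Zn gn.
  have -> : q w / (Zs * gamma) * (E * Zs / A + gamma * K) = r w + q w / Zs * K.
    by rewrite /r /q /E; field; rewrite ?Zn ?gn ?An.
  by [].
(* infinite normalizer *)
rewrite invr0.
rewrite (_ : dsum _ = 0%E); last first.
  rewrite /dsum esum1; last by move=> w _; rewrite mulr0 mul0r; apply: maxxx.
  rewrite esum1; last by move=> w _; rewrite mulr0 mul0r oppe0; apply: maxxx.
  by rewrite sube0.
set k := expR (gamma * m wh) / (gamma * A).
have k0 : 0 < k by rewrite /k divr_gt0 ?mulr_gt0 // expR_gt0.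
have -> : (\esum_(w in [set: W]) (r w)%:E = +oo)%E.
  apply/eqP; rewrite -leye_eq.
  have -> : (+oo = k%:E * \esum_(w in [set: W]) (q w)%:E)%E.
    by rewrite SE gt0_muley // lte_fin.
  rewrite -(@esumZ_ge0 _ _ _ _ (ltW k0) q0).
  apply: le_esum => w _; rewrite lee_fin /r /k /q.
  have h1 : expR (gamma * m wh) <= expR (gamma * m w) by rewrite ler_expR ler_pM2l.
  have h2 : 0 <= expR (- gamma * e w) * Q w / (gamma * A).
    by rewrite divr_ge0 ?mulr_ge0 // ltW // expR_gt0.
  have := ler_wpM2l h2 h1.
  have -> : expR (- gamma * e w) * Q w / (gamma * A) * expR (gamma * m wh) =
    expR (gamma * m wh) / (gamma * A) * (expR (- gamma * e w) * Q w) by ring.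
  have -> : expR (- gamma * e w) * Q w / (gamma * A) * expR (gamma * m w) =
    Q w * expR (gamma * m w) / (gamma * A) * expR (- gamma * e w) by ring.
  by [].
by rewrite addey.
Qed.
End S4.

Theorem proposition5 (R : realType) (d : measure_display) (Z : measurableType d)
  (W : countType) (f : W -> Z -> R) (Q : W -> R) (gamma sigma : R)
  (mu : probability Z R) (n : nat) (w_hat : W) :
  (forall w, measurable_fun setT (f w)) ->
  distribution_on Q ->
  0 < gamma ->
  (forall w, subgaussian mu (f w) sigma) ->
  (forall w, true_mean mu f w_hat <= true_mean mu f w) ->
  (0 < n)%N ->
  (iid_expect mu n (gibbs_risk mu f Q gamma)
     <= ereal_inf (range (fun w => (true_mean mu f w)%:E))
        + (gamma^-1)%:E * KL_dirac Q w_hat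
        + (gamma * sigma ^+ 2 / (2 * n%:R))%:E)%E.
Proof.
move=> mf [Q0 Qsum] g0 sg mmin n0.
have infE : ereal_inf (range (fun w => (true_mean mu f w)%:E)) = (true_mean mu f w_hat)%:E.
  apply/le_anti/andP; split.
  - by apply: ereal_inf_lbound; exists w_hat.
  - by apply: le_ereal_inf_tmp => _ [w _ <-]; rewrite lee_fin; exact: mmin.
rewrite infE.
have [Qh0|Qh0] := ltP 0 (Q w_hat); last first.
  rewrite /KL_dirac ltNge Qh0 /= gt0_muley ?lte_fin ?invr_gt0 //.
  by rewrite addey // addye // leey.
set m := true_mean mu f.
have nn : (n%:R : R) != 0 by rewrite pnatr_eq0 -lt0n.
have n0R : (0 < n%:R :> R) by rewrite ltr0n.
have gn : gamma != 0 by rewrite gt_eqF.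
set A := expR (gamma ^+ 2 * sigma ^+ 2 / (2 * n%:R)).
have A0 : 0 < A by apply: expR_gt0.
have An : A != 0 by rewrite gt_eqF.
set lam := - (gamma / n%:R).
set h := fun w z => expR (lam * f w z).
have h0 w z : 0 <= h w z by rewrite ltW // expR_gt0.
have hm w : measurable_fun setT (h w).
  by apply: measurableT_comp => //; apply: measurable_funM => //; exact: measurable_cst.
have finF w : (\int[mu]_z (f w z)%:E = (m w)%:E)%E.
  by rewrite /m /true_mean fineK // integrable_fin_num // (sg w).1.
have hbound w : (\int[mu]_z (h w z)%:E <= (expR (lam * m w) * expR (lam ^+ 2 * sigma ^+ 2 / 2))%:E)%E.
  have e1 : (fun z => (h w z)%:E) =
      (fun z => (expR (lam * m w))%:E * (expR (lam * (f w z - m w)))%:E)%E.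
    by apply: funext => z; rewrite -EFinM -expRD /h; congr (_%:E); congr expR; ring.
  have mexp : measurable_fun setT (fun z => (expR (lam * (f w z - m w)))%:E).
    apply/measurable_EFinP; apply: measurableT_comp => //; apply: measurable_funM => //.
    by apply: measurable_funB => //.
  have f10 : forall z, setT z -> (0 <= (expR (lam * (f w z - m w)))%:E)%E.
    by move=> z _; rewrite lee_fin ltW // expR_gt0.
  rewrite e1 (ge0_integralZl_EFin mu measurableT f10 mexp (ltW (expR_gt0 _))).
  rewrite EFinM; apply: lee_wpmul2l; first by rewrite lee_fin ltW // expR_gt0.
  exact: (sg w).2 lam.
have hpos w : (0 <= \int[mu]_z (h w z)%:E)%E.
  by apply: integral_ge0 => z _; rewrite lee_fin.
set Ih := fun w => fine (\int[mu]_z (h w z)%:E).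
have IhE w : (\int[mu]_z (h w z)%:E = (Ih w)%:E)%E.
  by rewrite /Ih fineK // ge0_fin_numE // (le_lt_trans (hbound w)) // ltry.
have Ihle w : Ih w <= expR (lam * m w) * expR (lam ^+ 2 * sigma ^+ 2 / 2).
  by rewrite -lee_fin -IhE.
have Ih0 w : 0 <= Ih w by rewrite -lee_fin -IhE.
set g := fun z => f w_hat z / n%:R.
have ge : (fun z => (g z)%:E) = (fun z => (n%:R^-1)%:E * (f w_hat z)%:E)%E.
  by apply: funext => z; rewrite /g -EFinM mulrC.
have ig : mu.-integrable setT (EFin \o g).
  have -> : EFin \o g = (fun z => (g z)%:E) by [].
  by rewrite ge; apply: (integrableZl measurableT); exact: (sg w_hat).1.
have Ige : (\int[mu]_z (g z)%:E = (m w_hat / n%:R)%:E)%E.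
  by rewrite ge (integralZl measurableT (sg w_hat).1) finF -EFinM mulrC.
set c0 := (ln (Q w_hat)^-1 + ln A - 1) / gamma.
set a := fun w => Q w * expR (gamma * m w) / (gamma * A).
have a0 w : 0 <= a w.
  by rewrite /a divr_ge0 ?mulr_ge0 // ltW // expR_gt0.
apply: (le_trans (@iid_le _ _ _ mu n _ (fun s => (c0 + \sum_(z <- s) g z)%:E
   + \esum_(w in [set: W]) (a w * \prod_(z <- s) h w z)%:E)%E _)).
  move=> s hs.
  apply: le_trans (@gibbs_pt R W (emp_mean f s) m Q gamma A w_hat g0 A0 Q0 Qh0 mmin) _.
  have em : emp_mean f s w_hat = \sum_(z <- s) g z.
    by rewrite /emp_mean hs /g mulr_suml.
  have ph w : \prod_(z <- s) h w z = expR (- gamma * emp_mean f s w).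
    rewrite -expR_sum; congr expR; rewrite /emp_mean hs /lam -mulr_sumr.
    by field.
  apply: leeD; first by rewrite em.
  by apply: le_esum => w _; rewrite ph.
apply: (le_trans (@iid_main R d Z mu W g (m w_hat / n%:R) h Ih ig Ige h0 hm IhE n c0 a a0)).
have KLE : KL_dirac Q w_hat = (ln (Q w_hat)^-1)%:E by rewrite /KL_dirac Qh0.
rewrite KLE.
apply: (@le_trans _ _ ((c0 + n%:R * (m w_hat / n%:R))%:E
   + \esum_(w in [set: W]) (gamma^-1 * Q w)%:E)%E).
  apply: leeD => //; apply: le_esum => w _; rewrite lee_fin.
  apply: (@le_trans _ _ (a w * (expR (lam * m w) * expR (lam ^+ 2 * sigma ^+ 2 / 2)) ^+ n)).
    by rewrite ler_wpM2l // lerXn2r // ?nnegrE // mulr_ge0 // ltW // expR_gt0.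
  have -> : (expR (lam * m w) * expR (lam ^+ 2 * sigma ^+ 2 / 2)) ^+ n
      = expR (- (gamma * m w)) * A.
    rewrite -expRD -expRM_natl /A -expRD; congr expR; rewrite /lam.
    by field.
  rewrite /a expRN; rewrite le_eqVlt; apply/orP; left; apply/eqP; field.
  by rewrite gn An gt_eqF ?expR_gt0.
rewrite (@esumZ_ge0 _ _ _ _ _ Q0) ?invr_ge0 ?(ltW g0) // Qsum mule1.
rewrite -!EFinM -!EFinD lee_fin /c0 /A expRK.
rewrite le_eqVlt; apply/orP; left; apply/eqP; field.
by rewrite nn gn.
Qed.
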